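(* Let $r, s, m, n$ be positive integers, let $f: V(H_{n,m}) \rightarrow \{-r,s\}$ be a function, and let $q = \frac{1}{n} f(V(H_{n,m}))$. Then $H_{n,m}$ can be decomposed into $n$ vertex-disjoint directed $m$-paths $P_1, P_2, \ldots, P_n$ such that \[\lambda(q,r,s,m) \le f(V(P_i)) \le \Lambda(q,r,s,m)\] for all $1 \le i \le n$.
   Context: For a set $Y$ of vertices, $f(Y)=\sum_{y\in Y}f(y)$. For positive integers $n,m$, $H_{n,m}$ is the directed graph whose vertex set is the disjoint union of $V_1,\dots,V_m$ with $|V_i|=n$, and whose arc set is $\bigcup_{i=1}^{m-1}\{(v,w): v\in V_i, w\in V_{i+1}\}$. A directed $m$-path is a directed path with $m$ vertices. $L(r,s,m)=\{-rx+sy : x,y\in\mathbb{Z}, x,y\ge 0, x+y=m\}$, and for real $q\in[-rm,sm]$, $\lambda(q,r,s,m)=\max\{p\in L(r,s,m): p\le q\}$ and $\Lambda(q,r,s,m)=\min\{p\in L(r,s,m): p\ge q\}$. *)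

(* Defs.v *)
From mathcomp Require Import all_boot all_order all_algebra.
Set Implicit Arguments. Unset Strict Implicit. Unset Printing Implicit Defensive.
Import Order.TTheory GRing.Theory Num.Theory.
Local Open Scope ring_scope.

(* Vertices of H_{n,m}: pairs (i, j) with i : 'I_m the layer V_{i+1},
   j : 'I_n the index inside the layer. *)
Definition HV (n m : nat) : finType := ('I_m * 'I_n)%type.

Definition Harc (n m : nat) : rel (HV n m) :=
  fun v w => (v.1 : nat).+1 == (w.1 : nat).

Definition is_dpath (n m : nat) (p : seq (HV n m)) : bool :=
  if p is x :: t then path (@Harc n m) x t && uniq p else false.

Definition is_dkpath (n m k : nat) (p : seq (HV n m)) : bool :=
  is_dpath p && (size p == k).

Definition Lset (r s m : nat) : seq int :=
  [seq (- ((r * x)%N)%:Z + ((s * (m - x))%N)%:Z) | x <- iota 0 m.+1].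

(* lambda(q,r,s,m) = max { p in L : p <= q }  (defined for q in [-rm, sm];
   the default value -rm is the minimum of L) *)
Definition lambdaL (q : rat) (r s m : nat) : int :=
  \big[Order.max/(- ((r * m)%N)%:Z)]_(p <- Lset r s m | p%:~R <= q) p.

(* Lambda(q,r,s,m) = min { p in L : p >= q }  (default sm = max of L) *)
Definition LambdaL (q : rat) (r s m : nat) : int :=
  \big[Order.min/(((s * m)%N)%:Z)]_(p <- Lset r s m | q <= p%:~R) p.

(* Main.v *)
Require Import Defs.
From mathcomp Require Import all_boot all_order all_algebra zify.
Import Order.TTheory GRing.Theory Num.Theory.
Definition Fd (n j c : nat) := (c + (n.-1 - j)) %/ n.
Definition rot (n c j : nat) := (j + n - c %% n) %% n.

Lemma div_between n k x : 0 < n -> k * n <= x -> x < k.+1 * n -> x %/ n = k.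
Proof.
move=> hn h1 h2.
have -> : x = k * n + (x - k * n) by lia.
rewrite divnMDl // divn_small ?addn0 //. 
rewrite mulSn in h2. lia.
Qed.

Lemma rot_small n c j : 0 < n -> j < n ->
  rot n c j = if c %% n <= j then j - c %% n else j + n - c %% n.
Proof.
move=> hn hj; rewrite /rot.
have hr : c %% n < n by rewrite ltn_mod.
case: ifP => h.
  have -> : j + n - c %% n = 1 * n + (j - c %% n) by lia.
  rewrite modnMDl modn_small //; lia.
rewrite modn_small //; lia.
Qed.

Lemma F_step n j c a : 0 < n -> j < n -> a <= n ->
  Fd n j (c + a) = Fd n j c + (rot n c j < a).
Proof.
move=> hn hj ha; rewrite /Fd rot_small //.
have hc := divn_eq c n.
set Q := c %/ n in hc *. set p := c %% n in hc *.
have hp : p < n by rewrite ltn_mod.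
have -> : c + a + (n.-1 - j) = Q * n + (p + a + (n.-1 - j)) by lia.
have -> : c + (n.-1 - j) = Q * n + (p + (n.-1 - j)) by lia.
rewrite !divnMDl //.
case: ifP => hpj.
  rewrite (@div_between n 0 (p + (n.-1 - j))) //; try lia.
  case: ltnP => h.
    rewrite (@div_between n 1); lia.
  rewrite (@div_between n 0); lia.
rewrite (@div_between n 1 (p + (n.-1 - j))) //; try lia.
case: ltnP => h.
  rewrite (@div_between n 2); lia.
rewrite (@div_between n 1); lia.
Qed.

Lemma telescope n j (a : nat -> nat) M : 0 < n -> j < n -> (forall t, a t <= n) ->
  \sum_(t < M) (rot n (\sum_(t' < t) a t') j < a t : nat) = Fd n j (\sum_(t < M) a t).
Proof.
move=> hn hj ha; elim: M => [|M IH].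
  by rewrite !big_ord0 /Fd add0n divn_small //; lia.
by rewrite !big_ord_recr /= IH F_step.
Qed.

Lemma Fd_bounds n j A : 0 < n -> j < n ->
  Fd n j A * n < A + n /\ A < Fd n j A * n + n.
Proof.
move=> hn hj; rewrite /Fd.
have h1 := leq_trunc_div (A + (n.-1 - j)) n.
have h2 := ltn_ceil (A + (n.-1 - j)) hn.
rewrite mulSn in h2. lia.
Qed.

Lemma rot_inj n c j j' : 0 < n -> j < n -> j' < n -> rot n c j = rot n c j' -> j = j'.
Proof.
move=> hn hj hj'; rewrite /rot => /eqP.
have hp : c %% n < n by rewrite ltn_mod.
rewrite -!addnBA; try lia.
rewrite eqn_modDr !modn_small //; by move/eqP.
Qed.
Lemma iota_path a k : path (fun x y => x.+1 == y) a (iota a.+1 k).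
Proof. by elim: k a => [|k IH] a //=; rewrite eqxx IH. Qed.

Lemma dk n m (g : 'I_m -> 'I_n) : 0 < m -> is_dkpath m [seq (i, g i) | i <- enum 'I_m].
Proof.
move=> hm; rewrite /is_dkpath size_map size_enum_ord eqxx andbT.
have hv := val_enum_ord m.
case E: (enum 'I_m) hv => [|x t] hv.
  by case: m hm g E hv => //.
have hu : uniq [seq ((i, g i) : HV n m) | i <- enum 'I_m].
  by rewrite map_inj_uniq ?enum_uniq // => u v [].
rewrite E in hu.
rewrite /is_dpath /= -/(uniq [seq ((i, g i) : HV n m) | i <- t]).
move: hu => /= /andP [-> ->]; rewrite !andbT.
have := @path_map _ _ (fun i : 'I_m => ((i, g i) : HV n m)) (@Harc n m) x t.
move=> ->.
have -> : path (relpre (fun i : 'I_m => ((i, g i) : HV n m)) (@Harc n m)) x t =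
   path (fun x y => x.+1 == y) (val x) (map val t).
  by rewrite path_map.
clear E; case: m hm g x t hv => // m _ g x t hv.
rewrite /= in hv. case: hv => h1 h2. change (path (fun a b => a.+1 == b) (nat_of_ord x) (map (@nat_of_ord _) t)). rewrite h1 h2; exact: iota_path.
Qed.
Local Open Scope ring_scope.
Lemma bounds (r s m n A x : nat) : (0 < r)%N -> (0 < s)%N -> (0 < n)%N -> (x <= m)%N ->
  (x * n < A + n)%N -> (A < x * n + n)%N ->
  forall q : rat, q = (((s * n * m)%N)%:Z - ((r + s) * A)%N%:Z)%:~R / n%:R ->
  lambdaL q r s m <= ((s * m)%N)%:Z - ((r + s) * x)%N%:Z <= LambdaL q r s m.
Proof.
move=> hr hs hn hxm h1 h2 q ->.
have hn' : (0 : rat) < n%:R by rewrite ltr0n.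
have nE : (n%:R : rat) = (n%:Z)%:~R by [].
apply/andP; split.
  rewrite /lambdaL /Lset big_map big_seq_cond.
  apply: (big_ind (fun p => p <= ((s * m)%N)%:Z - ((r + s) * x)%N%:Z)).
  - nia.
  - by move=> u v hu hv; rewrite ge_max hu hv.
  move=> y /andP [hy hq].
  rewrite mem_iota in hy.
  rewrite ler_pdivlMr // nE -intrM ler_int in hq.
  have hY : ((s * (m - y)) + s * y = s * m)%N by rewrite -mulnDr subnK //; lia.
  move: hq; rewrite -[(s * (m - y))%N]/(s * (m - y))%N.
  set Y := (s * (m - y))%N => hq.
  have h3 : ((r + s) * A <= (r + s) * (y * n))%N by nia.
  rewrite leq_pmul2l in h3; last by lia.
  have h4 : (x < y.+1)%N by rewrite -(ltn_pmul2r hn) mulSn; lia.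
  nia.
rewrite /LambdaL /Lset big_map big_seq_cond.
apply: (big_ind (fun p => ((s * m)%N)%:Z - ((r + s) * x)%N%:Z <= p)).
- nia.
- by move=> u v hu hv; rewrite le_min hu hv.
move=> y /andP [hy hq].
rewrite mem_iota in hy.
rewrite ler_pdivrMr // nE -intrM ler_int in hq.
have hY : ((s * (m - y)) + s * y = s * m)%N by rewrite -mulnDr subnK //; lia.
move: hq; set Y := (s * (m - y))%N => hq.
have h3 : ((r + s) * (y * n) <= (r + s) * A)%N by nia.
rewrite leq_pmul2l in h3; last by lia.
have h4 : (y < x.+1)%N by rewrite -(ltn_pmul2r hn) mulSn; lia.
nia.
Qed.

Lemma sumz I (l : seq I) (F : I -> nat) : \sum_(i <- l) (F i)%:Z = (\sum_(i <- l) F i)%N%:Z.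
Proof. by rewrite -natz natr_sum; apply: eq_bigr => i _; rewrite natz. Qed.

Theorem theorem4p3 (r s m n : nat) (hr : (0 < r)%N) (hs : (0 < s)%N)
  (hm : (0 < m)%N) (hn : (0 < n)%N) (f : HV n m -> int)
  (hf : forall v, f v = - (r%:Z) \/ f v = s%:Z) :
  let q : rat := (\sum_(v : HV n m) f v)%:~R / n%:R in
  exists P : 'I_n -> seq (HV n m),
    (forall i, is_dkpath m (P i)) /\
    (forall v : HV n m, exists! i, v \in P i) /\
    (forall i, lambdaL q r s m <= \sum_(v <- P i) f v <= LambdaL q r s m).
Proof.
move=> q.
pose P (i : 'I_m) (k : 'I_n) := f (i, k) == - (r%:Z).
have hfP v : f v = s%:Z - (r + s)%N%:Z * ((f v == - r%:Z) : nat)%:Z.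
  by case: (hf v) => ->; case: eqP => h /=; lia.
pose i0 : 'I_m := Ordinal hm.
pose a (t : nat) := count (P (insubd i0 t)) (enum 'I_n).
have ha t : (a t <= n)%N by rewrite /a; apply: leq_trans (count_size _ _) _; rewrite size_enum_ord.
pose C (t : nat) := (\sum_(t' < t) a t')%N.
pose sl (i : 'I_m) := filter (P i) (enum 'I_n) ++ filter (predC (P i)) (enum 'I_n).
have slP i : perm_eq (sl i) (enum 'I_n) by rewrite /sl perm_filterC.
have slu i : uniq (sl i) by rewrite (perm_uniq (slP i)) enum_uniq.
have sls i : size (sl i) = n by rewrite (perm_size (slP i)) size_enum_ord.
pose g (i : 'I_m) (j : 'I_n) : 'I_n := nth j (sl i) (rot n (C i) j).
have rotlt c (j : 'I_n) : (rot n c j < n)%N by rewrite /rot ltn_mod.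
have ginj i : injective (g i).
  move=> j j' /eqP; rewrite /g [nth j' _ _](set_nth_default j) ?sls //.
  rewrite nth_uniq ?sls // => /eqP /rot_inj h; apply/val_inj; exact: h.
pose Pth (j : 'I_n) := [seq ((i, g i j) : HV n m) | i <- enum 'I_m].
exists Pth.
split; first by move=> j; apply: dk.
split.
  move=> [i k]; exists (invF (ginj i) k); split.
    by apply/mapP; exists i; rewrite ?mem_enum // f_invF.
  by move=> j /mapP [i' _ [-> ->]]; rewrite invF_f.
have gP (i : 'I_m) j : (f (i, g i j) == - r%:Z) = (rot n (C i) j < a i)%N.
  change (P i (g i j) = (rot n (C i) j < a i)%N).
  have hai : a i = size (filter (P i) (enum 'I_n)) by rewrite /a valKd size_filter.
  rewrite hai /g /sl nth_cat; case: ifP => h.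
    by have := mem_nth j h; rewrite mem_filter => /andP [-> _].
  have h2 : (rot n (C i) j - size (filter (P i) (enum 'I_n)) < size (filter (predC (P i)) (enum 'I_n)))%N.
    have := sls i; rewrite /sl size_cat. have := rotlt (C i) j. lia.
  by have := mem_nth j h2; rewrite mem_filter => /andP [/negbTE -> _].
have htot : \sum_(v : HV n m) f v = ((s * n * m)%N)%:Z - ((r + s) * \sum_(t < m) a t)%N%:Z.
  rewrite (eq_bigr _ (fun v _ => hfP v)) sumrB sumr_const card_prod !card_ord -mulr_sumr sumz.
  have -> : (\sum_(v : HV n m) ((f v == - r%:Z) : nat))%N = (\sum_(t < m) a t)%N.
    symmetry; transitivity (\sum_(i < m) \sum_(k < n) ((f (i,k) == - r%:Z) : nat))%N.
      apply: eq_bigr => i _; rewrite /a valKd -sum1_count big_mkcond big_enum /=.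
      by apply: eq_big => // k _; case: (P i k).
    by rewrite pair_big /=; apply: eq_bigr => -[i k] _.
  rewrite -mulr_natr natz. nia.
move=> j.
have hsum : \sum_(v <- Pth j) f v = ((s * m)%N)%:Z - ((r + s) * Fd n j (\sum_(t < m) a t))%N%:Z.
  rewrite big_map big_enum /=.
  under eq_bigr => i _ do rewrite hfP gP.
  rewrite sumrB sumr_const card_ord -mulr_sumr sumz /C telescope //.
  have -> : s%:Z *+ m = (s * m)%N%:Z by rewrite -mulr_natr natz.
  by rewrite PoszM.
have hxm : (Fd n j (\sum_(t < m) a t) <= m)%N.
  rewrite -telescope //.
  apply: (@leq_trans (\sum_(t < m) 1)%N); first by apply: leq_sum => i _; exact: leq_b1.
  by rewrite sum1_card card_ord.
have [h1 h2] := @Fd_bounds n j (\sum_(t < m) a t) hn (ltn_ord j).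
rewrite hsum; apply: (@bounds r s m n _ _ hr hs hn hxm h1 h2).
by rewrite /q htot.
Qed.
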